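(* Let $A=\begin{pmatrix}A_I & A_{I\Gamma}\\ A_{\Gamma I} & A_\Gamma\end{pmatrix}$ be symmetric positive definite ($A_{I\Gamma}=A_{\Gamma I}^\top$, $A_\Gamma\in\mathbb{R}^{n_\Gamma\times n_\Gamma}$), $S_\Gamma=A_\Gamma-A_{\Gamma I}A_I^{-1}A_{I\Gamma}$, $S_I=A_I-A_{I\Gamma}A_\Gamma^{-1}A_{\Gamma I}$, $A_\Gamma=R_\Gamma^\top R_\Gamma$ the Cholesky factorization, and $K=R_\Gamma^{-\top}A_{\Gamma I}S_I^{-1}A_{I\Gamma}R_\Gamma^{-1}$. Let $U_k\in\mathbb{R}^{n_\Gamma\times k}$ have orthonormal columns that are eigenvectors of $K$ with $KU_k=U_k\Sigma_k$, $\Sigma_k$ diagonal, and set $\mathcal{P}_1=I+U_k\Sigma_kU_k^\top$ and $B=R_\Gamma^{-\top}S_\Gamma R_\Gamma^{-1}$. Then $$\mathcal{P}_1B=B-U_k(I+\Sigma_k)^{-1}U_k^\top+U_kU_k^\top,$$ so that $\mathcal{P}_1B$ acts as the identity on the column space of $U_k$ and coincides with $B$ on its orthogonal complement (which is $B$-invariant). Moreover $\mathcal{P}_1B$ is spectrally equivalent to $\mathcal{M}_1S_\Gamma$ where $\mathcal{M}_1=A_\Gamma^{-1}+\breve Z_k\Sigma_k\breve Z_k^\top$ with $\breve Z_k=R_\Gamma^{-1}U_k$.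
   Context: $S_\Gamma$ and $S_I$ are the Schur complements of $A$ with respect to $A_\Gamma$ and $A_I$; $K$ is symmetric positive semidefinite and $R_\Gamma S_\Gamma^{-1}R_\Gamma^\top=I+K$. ''Spectrally equivalent'' means having the same eigenvalues with multiplicities. *)

(* Defs.v *)
From HB Require Import structures.
From mathcomp Require Import all_boot all_order all_algebra.
Set Implicit Arguments. Unset Strict Implicit. Unset Printing Implicit Defensive.
Import Order.TTheory GRing.Theory Num.Theory.
Local Open Scope ring_scope.

Definition sym_pos_def (R : realFieldType) (n : nat) (M : 'M[R]_n) : Prop :=
  M^T = M /\ forall x : 'cV[R]_n, x != 0 -> 0 < (x^T *m M *m x) 0 0.

Definition chol_factor (R : realFieldType) (n : nat) (Rm : 'M[R]_n) : Prop :=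
  (forall i j : 'I_n, (j < i)%N -> Rm i j = 0) /\ (forall i : 'I_n, 0 < Rm i i).

(* "Spectrally equivalent": same eigenvalues with (algebraic) multiplicities,
   i.e. equal characteristic polynomials. *)
Definition spectrally_equivalent (R : realFieldType) (n : nat) (M N : 'M[R]_n) : Prop :=
  char_poly M = char_poly N.

(* Main.v *)
Require Import Defs.
From HB Require Import structures.
From mathcomp Require Import all_boot all_order all_algebra.
Import Order.TTheory GRing.Theory Num.Theory.
Local Open Scope ring_scope.

Lemma ker_unit (R : fieldType) n (M : 'M[R]_n) :
  (forall x : 'cV[R]_n, M *m x = 0 -> x = 0) -> M \in unitmx.
Proof.
move=> H; rewrite unitmxE unitfE -det_tr; apply/negP => /det0P [v vn0 hv].
have := H v^T; rewrite -[M *m _]trmxK trmx_mul trmxK hv trmx0 => /(_ erefl) /eqP.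
by rewrite trmx_eq0 (negbTE vn0).
Qed.

Lemma char_poly_conj (R : fieldType) n (A P : 'M[R]_n) : P \in unitmx ->
  char_poly (invmx P *m A *m P) = char_poly A.
Proof.
move=> uP; rewrite /char_poly.
have e1 : ('X%:M : 'M_n) = map_mx polyC (invmx P) *m 'X%:M *m map_mx polyC P.
  by rewrite -mulmxA -scalar_mxC mulmxA -map_mxM mulVmx // map_mx1 mul1mx.
have -> : char_poly_mx (invmx P *m A *m P) =
   map_mx polyC (invmx P) *m char_poly_mx A *m map_mx polyC P.
  by rewrite /char_poly_mx !map_mxM mulmxBr mulmxBl -e1.
rewrite !det_mulmx mulrAC -det_mulmx -map_mxM mulVmx //.
by rewrite map_mx1 det1 mul1r.
Qed.

Lemma pd_contra (R : realFieldType) n (M : 'M[R]_n) (y : 'cV[R]_n) :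
  sym_pos_def M -> y != 0 -> y^T *m (M *m y) = 0 -> False.
Proof.
move=> [_ H] yn0 e; have := H y yn0; rewrite -mulmxA e mxE ltxx //.
Qed.
Theorem mainTheorem4 (R : realFieldType) (nI nG k : nat)
    (AI : 'M[R]_nI) (AIG : 'M[R]_(nI, nG)) (AGI : 'M[R]_(nG, nI)) (AG : 'M[R]_nG)
    (RG : 'M[R]_nG) (U : 'M[R]_(nG, k)) (d : 'rV[R]_k) :
  sym_pos_def (block_mx AI AIG AGI AG) ->
  AIG = AGI^T ->
  chol_factor RG -> AG = RG^T *m RG ->
  let SG := AG - AGI *m invmx AI *m AIG in
  let SI := AI - AIG *m invmx AG *m AGI in
  let K := invmx RG^T *m AGI *m invmx SI *m AIG *m invmx RG in
  let Sig := diag_mx d in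
  U^T *m U = 1%:M ->
  K *m U = U *m Sig ->
  let P1 := 1%:M + U *m Sig *m U^T in
  let B := invmx RG^T *m SG *m invmx RG in
  let Zk := invmx RG *m U in
  let M1 := invmx AG + Zk *m Sig *m Zk^T in
  [/\ P1 *m B = B - U *m invmx (1%:M + Sig) *m U^T + U *m U^T,
      (P1 *m B) *m U = U,
      (forall x : 'cV[R]_nG, U^T *m x = 0 ->
         (P1 *m B) *m x = B *m x /\ U^T *m (B *m x) = 0)
    & spectrally_equivalent (P1 *m B) (M1 *m SG)].
Proof.
move=> Hpd HIG _ HAG SG SI K Sig HU HKU P1 B Zk M1.
have [Hsym _] := Hpd.
move: Hsym; rewrite tr_block_mx => /eq_block_mx [sAI sAGI sAIG sAG].
have uAI : AI \in unitmx.
  apply: ker_unit => x hx; apply/eqP/negPn/negP => xn0.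
  apply: (@pd_contra _ _ _ (col_mx x 0) Hpd); first by rewrite col_mx_eq0 negb_and xn0.
  by rewrite mul_block_col hx !mulmx0 !addr0 tr_col_mx mul_row_col mulmx0 trmx0 mul0mx addr0.
have uAG : AG \in unitmx.
  apply: ker_unit => x hx; apply/eqP/negPn/negP => xn0.
  apply: (@pd_contra _ _ _ (col_mx 0 x) Hpd); first by rewrite col_mx_eq0 negb_and xn0 orbT.
  by rewrite mul_block_col hx !mulmx0 !add0r tr_col_mx mul_row_col mulmx0 trmx0 mul0mx addr0.
have uSI : SI \in unitmx.
  apply: ker_unit => x hx; apply/eqP/negPn/negP => xn0.
  apply: (@pd_contra _ _ _ (col_mx x (- (invmx AG *m AGI *m x))) Hpd).
    by rewrite col_mx_eq0 negb_and xn0.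
  rewrite mul_block_col !mulmxN !mulmxA mulmxV // mul1mx subrr.
  have -> : AI *m x - AIG *m invmx AG *m AGI *m x = SI *m x by rewrite /SI mulmxBl.
  by rewrite hx col_mx0 mulmx0.
have uRG : RG \in unitmx by move: uAG; rewrite HAG unitmx_mul => /andP[].
have uRGt : RG^T \in unitmx by rewrite unitmx_tr.
have hAGi : invmx AG = invmx RG *m invmx RG^T.
  have hX : AG *m (invmx RG *m invmx RG^T) = 1%:M.
    by rewrite HAG mulmxA mulmxK // mulmxV.
  by have := mulKmx uAG (invmx RG *m invmx RG^T); rewrite hX mulmx1.
have hS : SG *m invmx AG *m AGI = AGI *m invmx AI *m SI.
  rewrite /SG /SI !mulmxBl !mulmxBr !mulmxA mulmxV // mul1mx mulmxKV //.
have hB1 : B *m (1%:M + K) = 1%:M.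
  rewrite mulmxDr mulmx1 /B /K !mulmxA.
  have hS' := congr1 (mulmx (invmx RG^T)) hS; rewrite !mulmxA in hS'.
  rewrite -(mulmxA _ (invmx RG)) -hAGi hS' mulmxK // -mulmxDl.
  rewrite -!(mulmxA (invmx RG^T)) -mulmxDr.
  have -> : SG + AGI *m invmx AI *m AIG = AG by rewrite /SG subrK.
  by rewrite HAG mulmxA mulVmx // mul1mx mulmxV.
have hBs : B^T = B.
  rewrite /B !trmx_mul !trmx_inv trmxK /SG linearB /= !trmx_mul trmx_inv.
  by rewrite sAI sAIG sAGI sAG !mulmxA.
have uI : (1%:M + Sig) \in unitmx.
  apply: ker_unit => v hv.
  have h1 : (1%:M + K) *m (U *m v) = 0.
    by rewrite mulmxA mulmxDl mul1mx HKU -{1}[U]mulmx1 -mulmxDr -mulmxA hv mulmx0.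
  have h2 : U *m v = 0.
    by have := congr1 (mulmx B) h1; rewrite mulmxA hB1 mul1mx mulmx0.
  by rewrite -[v]mul1mx -HU -mulmxA h2 mulmx0.
set D := invmx (1%:M + Sig).
have hBU : B *m U = U *m D.
  have e : B *m U *m (1%:M + Sig) = U.
    by rewrite -mulmxA mulmxDr mulmx1 -HKU -{1}[U]mul1mx -mulmxDl mulmxA hB1 mul1mx.
  by rewrite -{2}e mulmxK.
have hDt : D^T = D by rewrite /D trmx_inv linearD /= trmx1 tr_diag_mx.
have hUB : U^T *m B = D *m U^T.
  by rewrite -[U^T *m B]trmxK trmx_mul trmxK hBs hBU trmx_mul hDt.
have hSD : Sig *m D = 1%:M - D.
  by rewrite -(mulmxV uI) mulmxDl mul1mx addrC addKr.
split.
- rewrite /P1 mulmxDl mul1mx -mulmxA hUB mulmxA -(mulmxA U) hSD mulmxBr mulmx1.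
  by rewrite mulmxBl addrA addrAC.
- rewrite -mulmxA hBU mulmxA /P1 mulmxDl mul1mx -mulmxA HU mulmx1.
  by rewrite -{1}[U]mulmx1 -mulmxDr mulmxK.
- move=> x hx; have hBx : U^T *m (B *m x) = 0 by rewrite mulmxA hUB -mulmxA hx mulmx0.
  split=> //.
  by rewrite -mulmxA /P1 mulmxDl mul1mx -mulmxA hBx mulmx0 addr0.
have hM1 : M1 = invmx RG *m P1 *m invmx RG^T.
  rewrite /M1 /Zk hAGi trmx_mul trmx_inv /P1 mulmxDr mulmx1 mulmxDl !mulmxA.
  done.
have hM : M1 *m SG = invmx RG *m (P1 *m B) *m RG.
  rewrite /B !mulmxA.
  by rewrite mulmxKV // hM1.
by rewrite /spectrally_equivalent hM char_poly_conj.
Qed.
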